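(* Let $\epsilon\in(0,1/4]$. Define ${\rm sign}(x)=1$ if $x\ge0$ and ${\rm sign}(x)=-1$ otherwise. Define the sequence $(y(t))_{t\ge1}$ by $y(1)=0$ and $$y(t+1)=(1-\epsilon)y(t)-\frac{\frac12(1-\epsilon)\,{\rm sign}(y(t)-1)+\epsilon\Delta(t)}{\sqrt t},\qquad \Delta(t)=\frac{\epsilon\sqrt t\,y(t)-\frac{\epsilon}{2}{\rm sign}(y(t)-1)}{1-\epsilon}.$$ Then $y(t)\in[0,2]$ for all $t$; $y(t)\le\frac{2\epsilon^{-1}}{\sqrt t}$ for all $t$; and there exists $t_1$ such that $y(t)\ge\frac{\epsilon^{-1}}{16\sqrt t}$ for all $t\ge t_1$. *)

(* Defs.v *)
From Stdlib Require Import Reals.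
Open Scope R_scope.

Definition sgn (x : R) : R := if Rle_dec 0 x then 1 else -1.

Definition Delta (eps : R) (t : nat) (y : R) : R :=
  (eps * sqrt (INR t) * y - (eps / 2) * sgn (y - 1)) / (1 - eps).

Definition ystep (eps : R) (t : nat) (y : R) : R :=
  (1 - eps) * y
  - ((1 / 2) * (1 - eps) * sgn (y - 1) + eps * Delta eps t y) / sqrt (INR t).

(* yseq eps t = y(t) for t >= 1; yseq eps 0 = 0 is an unused junk value *)
Fixpoint yseq (eps : R) (t : nat) : R :=
  match t with
  | O => 0
  | S O => 0
  | S t' => ystep eps t' (yseq eps t')
  end.

(* Main.v *)
Require Import Defs.
From Stdlib Require Import Reals Lra Lia Psatz ZArith.
Open Scope R_scope.

Lemma yS eps t : (1 <= t)%nat -> yseq eps (S t) = ystep eps t (yseq eps t).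
Proof. intros H; destruct t; [lia | reflexivity]. Qed.

Lemma sq_facts t : (1 <= t)%nat ->
  sqrt (INR t) * sqrt (INR t) = INR t /\ 1 <= INR t /\ 1 <= sqrt (INR t).
Proof.
  intros H. assert (1 <= INR t) by (change 1 with (INR 1); apply le_INR; lia).
  assert (E := sqrt_sqrt (INR t) ltac:(lra)).
  assert (0 <= sqrt (INR t)) by apply sqrt_pos.
  split; [exact E | split; [lra | nra]].
Qed.

Lemma step_eq eps t y : 0 < eps < 1 -> (1 <= t)%nat ->
  ystep eps t y = (1 - 2*eps)/(1-eps) * (y - sgn (y-1) / (2 * sqrt (INR t))).
Proof.
  intros He Ht. destruct (sq_facts t Ht) as [E [H1 H2]].
  unfold ystep, Defs.Delta. set (s := sqrt (INR t)) in *. set (g := sgn (y-1)).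
  field; split; lra.
Qed.

Section S.
Variable eps : R.
Hypothesis heps : 0 < eps <= 1/4.
Let c := (1 - 2*eps)/(1-eps).

Lemma c_facts : 2/3 <= c /\ c < 1 /\ c * (1-eps) = 1 - 2*eps.
Proof.
  assert (C3 : c * (1-eps) = 1 - 2*eps) by (unfold c; field; lra).
  split; [|split]; [nra|nra|exact C3].
Qed.

Lemma ynext t : (1 <= t)%nat ->
  yseq eps (S t) = c * (yseq eps t - sgn (yseq eps t - 1) / (2 * sqrt (INR t))).
Proof. intros Ht. rewrite yS by exact Ht. apply step_eq; [lra | exact Ht]. Qed.

Lemma part1 t : (1 <= t)%nat -> 0 <= yseq eps t <= 2.
Proof.
  induction t as [|t IH]; intros Ht; [lia|].
  destruct (Nat.eq_dec t 0) as [->|Hn]; [simpl; lra|].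
  assert (Ht1 : (1 <= t)%nat) by lia. specialize (IH Ht1).
  rewrite ynext by exact Ht1.
  destruct (sq_facts t Ht1) as [E [H1 H2]].
  set (s := sqrt (INR t)) in *. set (y := yseq eps t) in *.
  destruct c_facts as [C1 [C2 C3]].
  assert (0 < / s <= 1) by (split; [apply Rinv_0_lt_compat; lra|
     rewrite <- Rinv_1; apply Rinv_le_contravar; lra]).
  unfold sgn; destruct (Rle_dec 0 (y-1)).
  - replace (1/(2*s)) with (/2 * /s) by (field; lra). nra.
  - replace (-1/(2*s)) with (-(/2 * /s)) by (field; lra). nra.
Qed.

Lemma part2 t : (1 <= t)%nat -> yseq eps t * eps * sqrt (INR t) <= 2.
Proof.
  induction t as [|t IH]; intros Ht; [lia|].
  destruct (Nat.eq_dec t 0) as [->|Hn]; [simpl; lra|].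
  assert (Ht1 : (1 <= t)%nat) by lia. specialize (IH Ht1).
  assert (P := part1 (S t) Ht). rewrite ynext in P |- * by exact Ht1.
  assert (P0 := part1 t Ht1).
  destruct (sq_facts t Ht1) as [E [H1 H2]].
  destruct (sq_facts (S t) Ht) as [E' [H1' H2']].
  set (s := sqrt (INR t)) in *. set (s' := sqrt (INR (S t))) in *.
  rewrite S_INR in E', H1'.
  set (y := yseq eps t) in *.
  set (y' := c * _) in *.
  destruct c_facts as [C1 [C2 C3]].
  assert (K : y' * eps * s <= 2 - 3 * eps / 2).
  { unfold y', sgn; destruct (Rle_dec 0 (y-1)).
    - replace (c * (y - 1 / (2 * s)) * eps * s) with (c * (y*eps*s) - c*eps/2) by (field; lra).
      assert (c <= 1 - 3*eps/4) by nra. nra.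
    - replace (c * (y - -1 / (2 * s)) * eps * s) with (c * (y*eps*s) + c*eps/2) by (field; lra).
      assert (c * (4 + eps) <= 4 - 3*eps) by nra. nra. }
  assert (Q : 2 * s * s' <= 2 * s * s + 1).
  { assert (0 <= s') by (apply sqrt_pos). nra. }
  assert (Y : 0 <= y' * eps) by nra.
  assert (A := Rmult_le_compat_l _ _ _ Y Q).
  assert (B : y' * eps * (2*s*s+1) = 2 * s * (y' * eps * s) + y' * eps) by ring.
  assert (y' * eps <= 2 * eps) by nra.
  assert (y' * eps * (2 * s * s') <= 2 * (2 * s)) by nra.
  assert (0 < 2 * s) by lra.
  apply Rmult_le_reg_r with (2*s); [lra|]. nra.
Qed.

Lemma part3 t : (2 <= t)%nat ->
  1/3 <= yseq eps t \/ 1 <= 16 * eps * sqrt (INR t) * yseq eps t.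
Proof.
  induction t as [|t IH]; intros Ht; [lia|].
  destruct c_facts as [C1 [C2 C3]].
  destruct (Nat.eq_dec t 1) as [->|Hn].
  { left. rewrite ynext by lia. simpl yseq. replace (INR 1) with 1 by reflexivity. rewrite sqrt_1.
    unfold sgn; destruct (Rle_dec 0 (0-1)); [lra|].
    replace (c * (0 - -1/(2*1))) with (c/2) by field. lra. }
  assert (Ht1 : (1 <= t)%nat) by lia. specialize (IH ltac:(lia)).
  assert (P0 := part1 t Ht1).
  rewrite ynext by exact Ht1.
  destruct (sq_facts t Ht1) as [E [H1 H2]].
  destruct (sq_facts (S t) ltac:(lia)) as [E' [H1' H2']].
  set (s := sqrt (INR t)) in *. set (s' := sqrt (INR (S t))) in *.
  rewrite S_INR in E', H1'.
  set (y := yseq eps t) in *.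
  assert (Ss : s <= s') by nra.
  assert (0 < / s <= 1) by (split; [apply Rinv_0_lt_compat; lra|
     rewrite <- Rinv_1; apply Rinv_le_contravar; lra]).
  assert (Es : s * / s = 1) by (field; lra).
  unfold sgn; destruct (Rle_dec 0 (y-1)).
  - left. replace (c * (y - 1 / (2 * s))) with (c * (y - /2 * /s)) by (field; lra). nra.
  - replace (c * (y - -1 / (2 * s))) with (c * y + c /2 * /s) by (field; lra).
    destruct (Rle_dec 1 (16 * eps * s * y)) as [R|R].
    + right. assert (c * (1 + 8*eps) >= 1) by nra.
      assert (16 * eps * s * (c * y + c / 2 * / s) = c * (16*eps*s*y) + 8*eps*c) by (field; lra).
      assert (16 * eps * s * (c * y + c / 2 * / s) >= 1) by nra.
      nra.
    + destruct IH as [IH|IH]; [|lra]. left.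
      assert (16 * eps * s < 3) by nra.
      assert (16 * eps / 3 < / s) by (apply Rmult_lt_reg_l with s; nra).
      assert (c * 8 * eps / 3 >= 1 - c) by nra.
      nra.
Qed.

End S.

Theorem lemma4 (eps : R) (heps : 0 < eps <= 1 / 4) :
  (forall t : nat, (1 <= t)%nat -> 0 <= yseq eps t <= 2) /\
  (forall t : nat, (1 <= t)%nat -> yseq eps t <= 2 * / eps / sqrt (INR t)) /\
  (exists t1 : nat, forall t : nat, (1 <= t)%nat -> (t1 <= t)%nat ->
      / eps / (16 * sqrt (INR t)) <= yseq eps t).
Proof.
  split; [exact (part1 eps heps)|split].
  - intros t Ht. destruct (sq_facts t Ht) as [E [H1 H2]].
    assert (K := part2 eps heps t Ht).
    set (s := sqrt (INR t)) in *.
    replace (2 * / eps / s) with (2 / (eps * s)) by (field; lra).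
    apply Rmult_le_reg_r with (eps * s); [nra|].
    unfold Rdiv. rewrite Rmult_assoc, Rinv_l by nra. lra.
  - destruct (archimed (/ (eps*eps))) as [A _].
    assert (0 <= IZR (up (/ (eps * eps)))).
    { assert (0 < / (eps*eps)) by (apply Rinv_0_lt_compat; nra). lra. }
    exists (Z.to_nat (up (/ (eps*eps))) + 2)%nat.
    intros t Ht Ht2.
    assert (H0 : INR (Z.to_nat (up (/ (eps * eps)))) <= INR t) by (apply le_INR; lia).
    rewrite INR_IZR_INZ, Z2Nat.id in H0 by (apply le_IZR; simpl; lra).
    destruct (sq_facts t Ht) as [E [H1 H2]].
    assert (P := part1 eps heps t Ht).
    assert (Q := part3 eps heps t ltac:(lia)).
    set (s := sqrt (INR t)) in *. set (y := yseq eps t) in *.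
    assert (I : eps * eps * / (eps*eps) = 1) by (field; lra).
    assert (eps * eps * (s*s) > 1).
    { rewrite E, <- I. apply Rmult_lt_compat_l; [nra|lra]. }
    assert (0 <= eps * s) by nra.
    assert (eps * s > 1) by nra.
    assert (1 <= 16 * eps * s * y) by (destruct Q; nra).
    replace (/ eps / (16 * s)) with (1 / (16 * eps * s)) by (field; lra).
    apply Rmult_le_reg_r with (16 * eps * s); [nra|].
    unfold Rdiv. rewrite Rmult_assoc, Rinv_l by nra. lra.
Qed.
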